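(* Let $k\ge4$ be an integer. Every $k$-ring contains a hole of length $k$.
   Context: Graphs are finite and simple. A hole is an induced cycle on at least four vertices; its length is its number of vertices. For $k\ge4$, a $k$-ring is a graph $R$ whose vertex set can be partitioned into nonempty sets $X_0,\dots,X_{k-1}$ (indices in $\mathbb{Z}_k$) such that for each $i$, $X_i$ can be ordered as $u^i_1,\dots,u^i_{|X_i|}$ so that $X_i\subseteq N_R[u^i_{|X_i|}]\subseteq\dots\subseteq N_R[u^i_1]=X_{i-1}\cup X_i\cup X_{i+1}$, where $N_R[v]$ denotes the closed neighbourhood of $v$. *)

(* Defs.v *)
From mathcomp Require Import all_boot.
Set Implicit Arguments. Unset Strict Implicit. Unset Printing Implicit Defensive.

Definition simple_graph (T : finType) (e : rel T) : Prop :=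
  symmetric e /\ irreflexive e.

Definition cnbhd (T : finType) (e : rel T) (x : T) : {set T} :=
  [set y | (y == x) || e x y].

Definition has_hole_of_length (T : finType) (e : rel T) (k : nat) : Prop :=
  exists c : 'I_k -> T, injective c /\
    forall i j : 'I_k, e (c i) (c j) = (j == ordS i) || (i == ordS j).

(* k-ring: partition X_0,...,X_{k-1} (given by the class map f : T -> 'I_k,
   X_i = f^{-1}(i)), each X_i nonempty, listed as s i = [u_1; ...; u_m] without
   repetition, with X_i ⊆ N[u_m] ⊆ ... ⊆ N[u_1] = X_{i-1} ∪ X_i ∪ X_{i+1}. *)
Definition part (T : finType) (k : nat) (f : T -> 'I_k) (i : 'I_k) : {set T} :=
  [set x | f x == i].

(* The ordering of X_i is  h i :: r i  (so X_i is nonempty); the chain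
   N[u_{j+1}] ⊆ N[u_j] is expressed as a path of the relation below. *)
Definition nbhd_sub (T : finType) (e : rel T) : rel T :=
  fun a b => cnbhd e b \subset cnbhd e a.

Definition is_ring (T : finType) (e : rel T) (k : nat) : Prop :=
  exists (f : T -> 'I_k) (h : 'I_k -> T) (r : 'I_k -> seq T),
    forall i : 'I_k,
      [/\ uniq (h i :: r i),
          (forall x, (x \in h i :: r i) = (f x == i)),
          path (nbhd_sub e) (h i) (r i),
          part f i \subset cnbhd e (last (h i) (r i)) &
          cnbhd e (h i) = part f (ord_pred i) :|: part f i :|: part f (ordS i)].

(* Main.v *)
Require Import Defs.
From mathcomp Require Import all_boot.

Lemma ordS_neq (k : nat) (i : 'I_k) : 1 < k -> (ordS i == i) = false.
Proof.
move=> hk; apply/negbTE/eqP => /(congr1 val) /=.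
have hi := ltn_ord i.
case: (ltngtP i.+1 k) => [lt|gt|eq].
- rewrite modn_small // => E; move: (ltnSn i); rewrite {2}E ltnn //.
- by rewrite ltnNge hi in gt.
- rewrite eq modnn => i0. rewrite -i0 in eq. by rewrite -eq in hk.
Qed.

Theorem proposition6p4 (k : nat) (T : finType) (e : rel T) :
  4 <= k -> simple_graph e -> is_ring e k -> has_hole_of_length e k.
Proof.
move=> hk [esym eirr] [f [h [r H]]].
have fh i : f (h i) = i.
  by have [_ Hm _ _ _] := H i; apply/eqP; rewrite -Hm mem_head.
have hk1 : 1 < k by apply: leq_trans hk.
exists h; split.
  by move=> i j eq; rewrite -(fh i) -(fh j) eq.
move=> i j.
have [<-|neij] := eqVneq i j.
  by rewrite eirr eq_sym ordS_neq.
have [_ _ _ _ Hn] := H i.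
have : (h j \in cnbhd e (h i)) = (h j \in part f (ord_pred i) :|: part f i :|: part f (ordS i)) by rewrite Hn.
rewrite !inE fh (eq_sym j i) (negbTE neij) orbF.
have -> : (h j == h i) = false.
  by apply/negbTE; apply: contra neij => /eqP E; rewrite -(fh i) -E fh.
move=> /= ->.
rewrite orbC; congr (_ || _).
by apply/eqP/eqP => [->|->]; rewrite ?ord_predK ?ordSK.
Qed.
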